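(* Let $n\ge 2$ and let $\sigma_1\in G_n$ be the automorphism with $\sigma_1(y_1y_2)=-y_1y_2$ and $\sigma_1(y_jy_{j+1})=y_jy_{j+1}$ for $2\le j\le n-1$. Then $(\mathrm{EC}_n-1)(\sigma_1(\mathrm{EC}_n)-1)=(x_1-\mathrm{EC}_{n-1}(x_2,\dots,x_n))^2$.
   Context: Let $x_1,\dots,x_n$ be algebraically independent indeterminates over $\mathbb{Q}$; in an algebraic closure fix $y_j$ with $y_j^2=1-x_j^2$. For indices $i_1<\dots<i_m$, $\mathrm{EC}_m(x_{i_1},\dots,x_{i_m})=\sum_{S\subseteq\{i_1,\dots,i_m\},\ |S|\text{ even}}(-1)^{|S|/2}\prod_{j\in S}y_j\prod_{j\notin S}x_j$, and $\mathrm{EC}_n=\mathrm{EC}_n(x_1,\dots,x_n)$. $G_n$ is the Galois group of $\mathbb{Q}(x_1,\dots,x_n,\ y_iy_j:1\le i<j\le n)$ over $\mathbb{Q}(x_1,\dots,x_n)$. *)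

(* Defs.v *)
From HB Require Import structures.
From mathcomp Require Import all_boot all_order all_algebra all_fingroup all_field.
Set Implicit Arguments. Unset Strict Implicit. Unset Printing Implicit Defensive.
Import GRing.Theory.
Local Open Scope ring_scope.

(* The rational function field Q(x_0, ..., x_{n-1}), built as the iterated
   fraction field Q(x_0)(x_1)...(x_{n-1}). *)
Fixpoint QX (n : nat) : fieldType :=
  if n is m.+1 then ({fraction {poly QX m}} : fieldType) else (rat : fieldType).

(* The indeterminates: xv n i is x_i in QX n (i < n); junk 0 for i >= n. *)
Fixpoint xv (n : nat) : nat -> QX n :=
  match n return nat -> QX n with
  | 0 => fun _ => 0
  | m.+1 => fun i => if i == m then (FracField.tofrac ('X : {poly QX m}))
                     else (FracField.tofrac ((xv m i)%:P : {poly QX m}))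
  end.

Definition EC (R : comNzRingType) (n : nat) (x y : nat -> R) (A : {set 'I_n}) : R :=
  \sum_(S : {set 'I_n} | (S \subset A) && ~~ odd #|S|)
     (-1) ^+ (#|S| %/ 2) * (\prod_(j in S) y j) * (\prod_(j in A :\: S) x j).

(* The field K_n = F(y_i y_j : i < j < n) inside L, where F = 1%VS is the
   base field Q(x_0..x_{n-1}). *)
Definition Kfield (F : fieldType) (L : fieldExtType F) (n : nat) (y : nat -> L)
  : {subfield L} :=
  <<1%AS & ([seq y i * y j | i <- iota 0 n, j <- iota i.+1 (n - i.+1)])%R>>%AS.

(* Main.v *)
Require Import Defs.
From HB Require Import structures.
From mathcomp Require Import all_boot all_order all_algebra all_fingroup all_field.
Import GRing.Theory.
Local Open Scope ring_scope.
Lemma id1 (R : comNzRingType) (a b c d : R) :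
  (a*c + b*d)^+2 + (a*d - b*c)^+2 = (a^+2 + b^+2) * (c^+2 + d^+2).
Proof.
have e : a*d*(b*c) = a*c*(b*d) by rewrite mulrACA [a*c*_]mulrACA [d*c]mulrC.
rewrite sqrrD sqrrB e !exprMn mulrDl !mulrDr.
rewrite addrAC [_ - _ + _]addrAC addrACA subrr addr0 addrACA [_^+2 * _ + _]addrC.
set P := a^+2 * c^+2; set Q := b^+2*d^+2; set P' := a^+2*d^+2; set T := b^+2*c^+2.
by rewrite -[P' + T + P]addrA [T + P]addrC [P' + _]addrC -addrA.
Qed.
Lemma id2 (R : comNzRingType) (x0 y0 C S : R) :
  y0^+2 = 1 - x0^+2 -> S^+2 = 1 - C^+2 ->
  (x0*C + y0*S - 1)*(x0*C + (-y0)*S - 1) = (x0 - C)^+2.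
Proof.
move=> hy hS.
have -> : x0*C + (-y0)*S - 1 = (x0*C - 1) - y0*S by rewrite mulNr addrAC.
rewrite addrAC mulrC -subr_sqr exprMn hy hS sqrrB sqrrB exprMn expr1n !mulr1.
rewrite mulrBl mul1r mulrBr mulr1 !opprB.
set a := x0^+2; set b := C^+2; set m := x0 * C *+ 2.
by rewrite addrACA [1 + _]addrC subrK [a * b - m + _]addrC addrA subrK.
Qed.

Section Comb.
Variables (R : comNzRingType) (n : nat).
Implicit Types (x y : nat -> R) (A S : {set 'I_n}) (w : nat -> R).

Definition Wsum w x y A : R := \sum_(S : {set 'I_n} | S \subset A)
  w #|S| * (\prod_(j in S) y j) * (\prod_(j in A :\: S) x j).

Definition wc (m : nat) : R := if odd m then 0 else (-1) ^+ (m %/ 2).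

Lemma EC_W x y A : EC x y A = Wsum wc x y A.
Proof.
rewrite /EC /Wsum big_mkcondr /=; apply: eq_bigr => S _.
by rewrite /wc; case: (odd #|S|) => //=; rewrite !mul0r.
Qed.

Lemma W_rec w x y A k : k \notin A ->
  Wsum w x y (k |: A) = x k * Wsum w x y A + y k * Wsum (fun m => w m.+1) x y A.
Proof.
move=> kA.
rewrite /Wsum (bigID (fun S => k \in S)) /= addrC; congr (_ + _).
  rewrite mulr_sumr; apply: eq_big => S.
    apply/andP/idP => [[/subsetP sS kS]|sA].
      apply/subsetP => j jS; have := sS j jS; rewrite !inE.
      by case/orP => // /eqP ejk; rewrite -ejk jS in kS.
    split; first exact: subset_trans sA (subsetU1 _ _).
    by apply: contra kA; apply: (subsetP sA).
  move=> /andP[_ kS].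
  have -> : (k |: A) :\: S = k |: (A :\: S).
    by apply/setP => j; rewrite !inE; case: eqP => // ->; rewrite kS.
  rewrite big_setU1 /=; last by rewrite !inE (negbTE kA) andbF.
  by rewrite mulrA mulrCA mulrA.
rewrite mulr_sumr.
rewrite (reindex_onto (fun T => k |: T) (fun S => S :\ k)) /=; last first.
  by move=> S /andP[_ kS]; rewrite setD1K.
apply: eq_big => T.
  rewrite setU11 andbT; apply/andP/idP => [[sT /eqP eT]|sTA].
    have kT : k \notin T by rewrite -eT !inE eqxx.
    apply/subsetP => j jT; have := subsetP sT j; rewrite !inE jT orbT => /(_ isT).
    by case/orP => // /eqP ejk; rewrite -ejk jT in kT.
  have kT : k \notin T by apply: contra kA; apply: (subsetP sTA).
  by rewrite setUS // setU1K.
rewrite setU11 andbT => /andP[_ /eqP eT].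
have kT : k \notin T by rewrite -eT !inE eqxx.
rewrite cardsU1 kT add1n big_setU1 //=.
have -> : (k |: A) :\: (k |: T) = A :\: T.
  by apply/setP => j; rewrite !inE; case: eqP => [->|] /=; rewrite ?(negbTE kA) ?andbF.
by rewrite mulrCA !mulrA.
Qed.

Lemma W_set0 w x y : Wsum w x y set0 = w 0%N.
Proof.
rewrite /Wsum (big_pred1 set0); last by move=> S; rewrite /= subset0.
by rewrite cards0 setDv !big_set0 !mulr1.
Qed.

Lemma W_eqw w w' x y A : (forall m, w m = w' m) -> Wsum w x y A = Wsum w' x y A.
Proof. by move=> e; apply: eq_bigr => S _; rewrite e. Qed.

Lemma W_opp w x y A : Wsum (fun m => - w m) x y A = - Wsum w x y A.
Proof. by rewrite /Wsum -sumrN; apply: eq_bigr => S _; rewrite !mulNr. Qed.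

Lemma W_eqy w x y y' A : (forall j : 'I_n, j \in A -> y j = y' j) ->
  Wsum w x y A = Wsum w x y' A.
Proof.
move=> e; apply: eq_bigr => S sA; congr (_ * _ * _); apply: eq_bigr => j jS.
by apply: e; apply: (subsetP sA).
Qed.

Lemma W_eqx w x x' y A : (forall j : 'I_n, x j = x' j) ->
  Wsum w x y A = Wsum w x' y A.
Proof.
by move=> e; apply: eq_bigr => S sA; congr (_ * _); apply: eq_bigr => j jS.
Qed.

Lemma W_scale w x y e A :
  Wsum w x (fun j => e * y j) A = Wsum (fun m => w m * e ^+ m) x y A.
Proof. by apply: eq_bigr => S _; rewrite prodrMl !mulrA. Qed.

Lemma wc_shift2 m : wc m.+2 = - wc m.
Proof.
rewrite /wc /= negbK; case: odd; first by rewrite oppr0.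
have h : (m.+2 %/ 2 = (m %/ 2).+1)%N.
  have -> : m.+2 = (m + 1 * 2)%N by rewrite mul1n addn2.
  by rewrite divnDMl // addn1.
by rewrite h exprS mulN1r.
Qed.

Lemma sumsq0 x y : Wsum wc x y set0 ^+ 2 + Wsum (fun m => wc m.+1) x y set0 ^+ 2 = 1.
Proof. by rewrite !W_set0 /wc /= expr0 expr1n expr0n addr0. Qed.

Lemma sumsq x y A : (forall j : 'I_n, j \in A -> x j ^+ 2 + y j ^+ 2 = 1) ->
  Wsum wc x y A ^+ 2 + Wsum (fun m => wc m.+1) x y A ^+ 2 = 1.
Proof.
have [N hA] : exists N, (#|A| <= N)%N by eexists.
elim: N A hA => [|N IH] A hA hxy.
  by move: hA; rewrite leqn0 cards_eq0 => /eqP ->; apply: sumsq0.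
have [->|[k kA]] := set_0Vmem A; first exact: sumsq0.
have eA := setD1K kA.
have kA' : k \notin A :\ k by rewrite !inE eqxx.
rewrite -eA !W_rec //.
rewrite (@W_eqw (fun m => wc m.+2) (fun m => - wc m)); last exact: wc_shift2.
rewrite W_opp mulrN id1.
rewrite hxy // IH ?mul1r //.
  by move: hA; rewrite (cardsD1 k A) kA add1n ltnS.
by move=> j; rewrite !inE => /andP[_]; apply: hxy.
Qed.
End Comb.
Arguments Wsum {R n}.
Arguments wc {R}.

Lemma QX_2 n : (2%:R : QX n) != 0.
Proof.
elim: n => [//|m IH] /=.
rewrite -(rmorph_nat (@FracField.tofrac _)) tofrac_eq0 -polyC_natr polyC_eq0.
exact: IH.
Qed.

Lemma QX_x2 n j : (j < n)%N -> (xv n j) ^+ 2 != 1.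
Proof.
elim: n j => [//|m IH] j /= hj.
have [ejm|ne] := eqVneq j m.
  rewrite -tofracXn -tofrac1 tofrac_eq; apply/eqP => h.
  by have := congr1 (fun p : {poly QX m} => size p) h; rewrite /= size_polyXn size_poly1.
rewrite -tofracXn -tofrac1 tofrac_eq -rmorphXn /= -polyC1 (inj_eq polyC_inj).
apply: IH; rewrite ltnS leq_eqVlt in hj; case/orP: hj => // /eqP h. by rewrite h eqxx in ne.
Qed.

Theorem mainTheorem8 (n : nat) (hn : (2 <= n)%N)
  (L : splittingFieldType (QX n)) (y : nat -> L)
  (hy : forall j, (j < n)%N -> y j ^+ 2 = 1 - ((xv n j)%:A) ^+ 2)
  (sigma1 : gal_of (Kfield n y))
  (hsig : (sigma1 \in 'Gal(Kfield n y / 1%AS))%g)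
  (h12 : sigma1 (y 0%N * y 1%N) = - (y 0%N * y 1%N))
  (hj : forall j, (1 <= j)%N -> (j <= n - 2)%N ->
          sigma1 (y j * y j.+1) = y j * y j.+1) :
  let x := fun j => (xv n j)%:A : L in
  (EC x y [set: 'I_n] - 1) * (sigma1 (EC x y [set: 'I_n]) - 1)
  = (x 0%N - EC x y [set j : 'I_n | (0 < j)%N]) ^+ 2.
Proof.
move=> x.
have sfix : forall a : QX n, sigma1 (a%:A) = a%:A.
  by move=> a; rewrite linearZ /= rmorph1.
have sM : forall a b : L, sigma1 (a * b) = sigma1 a * sigma1 b.
  by move=> a b; rewrite rmorphM.
have alg_inj : forall a b : QX n, (a%:A == b%:A :> L) = (a == b).
  by move=> a b; apply: (inj_eq (fmorph_inj (in_alg L))).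
have y2 : forall j, (j < n)%N -> y j ^+ 2 = (1 - xv n j ^+ 2)%:A.
  by move=> j hj'; rewrite hy // -!in_algE rmorphB rmorph1 rmorphXn.
have ynz : forall j, (j < n)%N -> y j != 0.
  move=> j hj'; apply/eqP => h; have := y2 j hj'; rewrite h expr0n /= => /eqP.
  by rewrite eq_sym scaler_eq0 oner_eq0 orbF subr_eq0 eq_sym (negbTE (QX_x2 _ _ hj')).
have two : (2%:R : L) != 0.
  have -> : (2%:R : L) = (2%:R : QX n)%:A by rewrite -in_algE rmorph_nat.
  by rewrite scaler_eq0 negb_or QX_2 oner_neq0.
have hs2 : forall j, (j < n)%N -> sigma1 (y j) = y j \/ sigma1 (y j) = - y j.
  move=> j hj'; have : sigma1 (y j) ^+ 2 == y j ^+ 2.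
    by rewrite -rmorphXn y2 //; apply/eqP; apply: sfix.
  by rewrite eqf_sqr => /orP[/eqP|/eqP]; [left|right].
have noneg : forall P : L, P != 0 -> - P = P -> False.
  move=> P hP h; have : P * 2%:R == 0 by rewrite mulr_natr mulr2n -{1}h addNr.
  by rewrite mulf_eq0 (negbTE hP) (negbTE two).
set e : L := if sigma1 (y 1%N) == y 1%N then 1 else -1.
have e1 : e = 1 \/ e = -1 by rewrite /e; case: ifP; [left|right].
have e2 : e ^+ 2 = 1 by case: e1 => ->; rewrite ?sqrrN expr1n.
have he1 : sigma1 (y 1%N) = e * y 1%N.
  rewrite /e; case: ifP => [/eqP -> |ne]; first by rewrite mul1r.
  by case: (hs2 1%N hn) => h; [rewrite h eqxx in ne | rewrite h mulN1r].
have hej : forall j, (1 <= j)%N -> (j < n)%N -> sigma1 (y j) = e * y j.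
  elim=> [//|j IH] _ hjn.
  case: (posnP j) => [-> //|jpos].
  have hjj : sigma1 (y j * y j.+1) = y j * y j.+1.
    apply: hj => //; rewrite leq_subRL ?addn2 //; exact: leq_trans hjn.
  have IHj := IH jpos (ltnW hjn).
  have P0 : y j * y j.+1 != 0 by rewrite mulf_neq0 ?ynz // ltnW.
  rewrite sM IHj in hjj.
  case: (hs2 j.+1 hjn) => h; rewrite h in hjj *; case: e1 => ee; rewrite ee in hjj *;
    rewrite ?mul1r ?mulN1r //; exfalso;
    move: hjj; rewrite ?mul1r ?mulN1r ?mulrN ?mulNr => hjj; exact: noneg _ P0 hjj.
have he0 : sigma1 (y 0%N) = e * (- y 0%N).
  have P0 : y 0%N * y 1%N != 0 by rewrite mulf_neq0 ?ynz // ltnW.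
  rewrite sM he1 in h12.
  case: (hs2 0%N (ltnW hn)) => h; rewrite h in h12 *; case: e1 => ee; rewrite ee in h12 *;
    rewrite ?mul1r ?mulN1r ?opprK //; exfalso;
    move: h12; rewrite ?mul1r ?mulN1r ?mulrNN ?mulNr ?mulrN => h12; exact: noneg _ P0 (esym h12).
pose yy := fun j : nat => if j == 0%N then - y 0%N else y j.
have hsy : forall j : 'I_n, sigma1 (y j) = e * yy j.
  move=> [j hjn] /=; rewrite /yy; case: (posnP j) => [->|jp]; first by rewrite he0.
  by rewrite hej.
have sW : forall (w : nat -> L) (A : {set 'I_n}), sigma1 (Wsum w x y A) = Wsum (fun m => sigma1 (w m))
    (fun j => sigma1 (x j)) (fun j => sigma1 (y j)) A.
  move=> w A; rewrite /Wsum rmorph_sum; apply: eq_bigr => S _.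
  by rewrite !rmorphM !rmorph_prod.
have swc : forall m, sigma1 (wc m) = wc m.
  by move=> m; rewrite /wc; case: odd; rewrite ?rmorph0 ?rmorphXn ?rmorphN1.
rewrite !EC_W sW.
rewrite (@W_eqw L n (fun m => sigma1 (wc m)) wc); last exact: swc.
rewrite (@W_eqx L n wc (fun j => sigma1 (x j)) x); last by move=> j; rewrite /x sfix.
rewrite (@W_eqy L n wc x (fun j => sigma1 (y j)) (fun j => e * yy j)); last by move=> j _; rewrite hsy.
rewrite W_scale (@W_eqw L n (fun m => wc m * e ^+ m) wc); last first.
  move=> m; rewrite /wc; case: ifP => [_|/negbT ev]; first by rewrite mul0r.
  by rewrite -[m in e ^+ m](odd_double_half m) (negbTE ev) add0n -mul2n exprM e2 expr1n mulr1.
pose k0 : 'I_n := Ordinal (ltnW hn).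
set A := [set j : 'I_n | (0 < j)%N].
have eF : [set: 'I_n] = k0 |: A.
  by apply/setP => j; rewrite !inE -val_eqE /=; case: (nat_of_ord j).
have k0A : k0 \notin A by rewrite inE.
have eyA : forall w : nat -> L, Wsum w x yy A = Wsum w x y A.
  move=> w; apply: W_eqy => j; rewrite inE /yy => jp.
  by rewrite (negbTE (lt0n_neq0 jp)).
rewrite eF !W_rec // !eyA /yy /=.
have ss := @sumsq L n x y A.
apply: id2; first exact: hy 0%N (ltnW hn).
rewrite -ss; first by rewrite addrAC subrr add0r.
by move=> j _; rewrite hy // /x addrC subrK.
Qed.
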